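(* Let $\mu$ be a singular cardinal, let $\vec{\mu}=\langle\mu_i:i<\operatorname{cf}(\mu)\rangle$ be an increasing sequence of regular cardinals cofinal in $\mu$, and let $\rho$ be a regular cardinal. Suppose $\vec f=\langle f_\nu:\nu<\rho\rangle$ is a sequence of functions in $\prod_{i<\operatorname{cf}(\mu)}\mu_i$ such that $(\vec\mu,\vec f)$ is a scale of length $\rho$ for $\mu$. Then $\rho\in\operatorname{spec}^*(A)$, where $A=\{\mu_i:i<\operatorname{cf}(\mu)\}$.
   Context: $(\vec\mu,\vec f)$ is a scale of length $\rho$ for $\mu$ if $\vec f$ is increasing and cofinal in $\prod_{i<\operatorname{cf}(\mu)}\mu_i$ modulo the ideal of bounded subsets of $\{\mu_i:i<\operatorname{cf}(\mu)\}$ (i.e., $f<g$ mod this ideal iff $f(\mu_i)<g(\mu_i)$ for all sufficiently large $i$). For a set $A$ of regular cardinals, $\prod A$ is the set of functions on $A$ with $f(a)\in a$; for $\mathcal{G}\subseteq\prod A$, $\operatorname{ub}(\mathcal{G})$ is the set of $a\in A$ with $\{f(a):f\in\mathcal{G}\}$ unbounded in $a$. $\operatorname{spec}^*(A)$ is the set of regular $\lambda$ such that there is $\mathcal{F}\subseteq\prod A$ of size $\lambda$ such that for every $\mathcal{F}_0\subseteq\mathcal{F}$ of size $\lambda$, $\operatorname{ub}(\mathcal{F}_0)$ is unbounded in $\sup(A)$. *)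

(* Defs.v *)
(* Infinite cardinals are represented as types equipped with a
   strict well-order that is an initial ordinal (not injectable into any proper
   initial segment). *)

Definition injective {A B : Type} (f : A -> B) : Prop :=
  forall a b, f a = f b -> a = b.

Definition equipotent (A B : Type) : Prop :=
  exists (f : A -> B) (g : B -> A),
    (forall a, g (f a) = a) /\ (forall b, f (g b) = b).

Definition well_order {T : Type} (lt : T -> T -> Prop) : Prop :=
  (forall x, ~ lt x x) /\
  (forall x y z, lt x y -> lt y z -> lt x z) /\
  (forall x y, lt x y \/ x = y \/ lt y x) /\
  well_founded lt.

Definition seg_lt {T : Type} (lt : T -> T -> Prop) (x : T)
  (a b : {y : T | lt y x}) : Prop := lt (proj1_sig a) (proj1_sig b).

Definition is_cardinal (T : Type) (lt : T -> T -> Prop) : Prop :=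
  well_order lt /\
  forall x : T, ~ exists f : T -> {y : T | lt y x}, injective f.

Definition infinite (T : Type) : Prop :=
  exists f : nat -> T, injective f.

Definition unbounded {T : Type} (lt : T -> T -> Prop) (S : T -> Prop) : Prop :=
  forall x, exists y, S y /\ ~ lt y x.

Definition is_regular (T : Type) (lt : T -> T -> Prop) : Prop :=
  is_cardinal T lt /\ infinite T /\
  forall S : T -> Prop, unbounded lt S -> equipotent {y : T | S y} T.

Definition is_singular (T : Type) (lt : T -> T -> Prop) : Prop :=
  is_cardinal T lt /\ infinite T /\ ~ is_regular T lt.

(* The sequence mu : K -> M is <mu_i : i < cf(mu)>.  Elements of
   prod_{i} mu_i are functions g : K -> M with g i < mu_i. *)
Definition in_prod {K M : Type} (ltM : M -> M -> Prop) (mu : K -> M)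
  (g : K -> M) : Prop := forall i, ltM (g i) (mu i).

Definition eventually {K : Type} (ltK : K -> K -> Prop) (Q : K -> Prop) : Prop :=
  exists i0, forall i, ~ ltK i i0 -> Q i.

Definition is_scale {K M P : Type} (ltK : K -> K -> Prop) (ltM : M -> M -> Prop)
  (mu : K -> M) (ltP : P -> P -> Prop) (f : P -> K -> M) : Prop :=
  (forall nu, in_prod ltM mu (f nu)) /\
  (forall nu nu', ltP nu nu' -> eventually ltK (fun i => ltM (f nu i) (f nu' i))) /\
  (forall g, in_prod ltM mu g -> exists nu, eventually ltK (fun i => ltM (g i) (f nu i))).

(* ub(G): the indices i (i.e. the points mu_i of A) such that
   {g(mu_i) : g in G} is unbounded in mu_i. *)
Definition ub {K M : Type} (ltM : M -> M -> Prop) (mu : K -> M)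
  (G : (K -> M) -> Prop) (i : K) : Prop :=
  forall x, ltM x (mu i) -> exists g, G g /\ ltM x (g i).

Definition in_spec_star {K M : Type} (ltM : M -> M -> Prop) (mu : K -> M)
  (P : Type) (ltP : P -> P -> Prop) : Prop :=
  is_regular P ltP /\
  exists F : (K -> M) -> Prop,
    (forall g, F g -> in_prod ltM mu g) /\
    equipotent {g : K -> M | F g} P /\
    forall F0 : (K -> M) -> Prop,
      (forall g, F0 g -> F g) ->
      equipotent {g : K -> M | F0 g} P ->
      forall x : M, exists i, ub ltM mu F0 i /\ ltM x (mu i).

(* Main.v *)
Require Import Defs.
From Stdlib Require Import Classical ClassicalEpsilon ProofIrrelevance.

Lemma max2 {T} (lt : T -> T -> Prop) : well_order lt ->
  forall a b, exists c, ~ lt c a /\ ~ lt c b.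
Proof.
  intros [irr [tr [tot _]]] a b.
  destruct (tot a b) as [H|[H|H]].
  - exists b; split; [intro H'; apply (irr a); eauto | apply irr].
  - subst; exists b; split; apply irr.
  - exists a; split; [apply irr | intro H'; apply (irr a); eauto].
Qed.

Lemma sig_eq {A} (Q : A -> Prop) (x y : {a | Q a}) : proj1_sig x = proj1_sig y -> x = y.
Proof.
  destruct x, y; simpl; intros ->. f_equal; apply proof_irrelevance.
Qed.

Theorem lemma5p5
  (M : Type) (ltM : M -> M -> Prop)
  (K : Type) (ltK : K -> K -> Prop)
  (mu : K -> M)
  (P : Type) (ltP : P -> P -> Prop)
  (f : P -> K -> M) :
  is_singular M ltM ->
  is_regular K ltK ->
  (forall i j, ltK i j -> ltM (mu i) (mu j)) ->
  (forall x : M, exists i, ltM x (mu i)) ->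
  (forall i, is_regular {y : M | ltM y (mu i)} (seg_lt ltM (mu i))) ->
  is_regular P ltP ->
  is_scale ltK ltM mu ltP f ->
  in_spec_star ltM mu P ltP.
Proof.
  intros [[WM _] _] [[WK _] _] Hmono Hcof Hseg HP [Hin [Hinc Hcov]].
  pose proof WM as [irrM [trM [totM _]]].
  pose proof WK as [irrK [trK [totK _]]].
  pose proof HP as [[WP HPc] _].
  pose proof WP as [irrP [trP [totP _]]].
  assert (finj : forall a b, f a = f b -> a = b).
  { intros a b E.
    destruct (totP a b) as [H|[H|H]]; auto; exfalso;
    destruct (Hinc _ _ H) as [i0 Hi0]; specialize (Hi0 i0 (irrK i0)); simpl in Hi0;
    rewrite E in Hi0; eapply irrM; eauto. }
  split; [exact HP|].
  exists (fun g => exists nu, g = f nu).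
  split; [intros g [nu ->]; apply Hin|].
  split.
  { exists (fun g : {g : K -> M | exists nu, g = f nu} => proj1_sig (constructive_indefinite_description (fun nu => proj1_sig g = f nu) (proj2_sig g))).
    exists (fun nu => exist (fun g => exists nu, g = f nu) (f nu) (ex_intro _ nu eq_refl)).
    split.
    - intros g. apply sig_eq. simpl.
      destruct (constructive_indefinite_description _ _); simpl; auto.
    - intros nu. simpl. destruct (constructive_indefinite_description _ _) as [n' E]; simpl.
      apply finj; auto. }
  intros F0 HF0 [e1 [e2 [He1 He2]]] x.
  apply NNPP; intro Hno.
  assert (Hunb : forall nu, exists nu', F0 (f nu') /\ ~ ltP nu' nu).
  { apply NNPP; intro Hn. apply not_all_ex_not in Hn as [x0 Hx0].
    assert (Hb : forall nu', F0 (f nu') -> ltP nu' x0).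
    { intros nu' Hf. apply NNPP; intro Hl. apply Hx0; eauto. }
    apply (HPc x0).
    unshelve eexists.
    { intro p. pose (g := e2 p).
      destruct (constructive_indefinite_description _ (HF0 _ (proj2_sig g))) as [nu E].
      exists nu. apply Hb. rewrite <- E. exact (proj2_sig g). }
    intros a b Eab. simpl in Eab.
    destruct (constructive_indefinite_description _ (HF0 _ (proj2_sig (e2 a)))) as [na Ea].
    destruct (constructive_indefinite_description _ (HF0 _ (proj2_sig (e2 b)))) as [nb Eb].
    simpl in Eab. injection Eab as Eab. subst nb.
    rewrite <- (He2 a), <- (He2 b). f_equal. apply sig_eq. congruence. }
  destruct (Hcof x) as [i1 Hi1].
  assert (Hbig : forall i, ~ ltK i i1 -> ltM x (mu i)).
  { intros i Hi. destruct (totK i1 i) as [H|[H|H]]; [eauto| subst; auto| contradiction]. }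
  assert (Hh : forall i, exists y, ltM y (mu i) /\
             (ltM x (mu i) -> forall g, F0 g -> ~ ltM y (g i))).
  { intro i. destruct (classic (ltM x (mu i))) as [Hx|Hx].
    - assert (~ ub ltM mu F0 i) by (intro; apply Hno; eauto).
      unfold ub in H. apply not_all_ex_not in H as [y Hy].
      apply imply_to_and in Hy as [Hy1 Hy2].
      exists y; split; auto. intros _ g Hg Hlt. apply Hy2; eauto.
    - destruct (Hseg i) as [_ [[s _] _]].
      exists (proj1_sig (s 0)). split; [exact (proj2_sig (s 0)) | intro; contradiction]. }
  destruct (choice _ Hh) as [h Hhp].
  destruct (Hcov h (fun i => proj1 (Hhp i))) as [nu [i2 Hi2]].
  destruct (Hunb nu) as [nu' [Hf' Hnl]].
  assert (Hle : exists i3, forall i, ~ ltK i i3 -> f nu i = f nu' i \/ ltM (f nu i) (f nu' i)).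
  { destruct (totP nu nu') as [H|[H|H]].
    - destruct (Hinc _ _ H) as [i3 Hi3]; exists i3; intros; right; auto.
    - subst; exists i1; auto.
    - contradiction. }
  destruct Hle as [i3 Hi3].
  destruct (max2 ltK WK i1 i2) as [c [Hc1 Hc2]].
  destruct (max2 ltK WK c i3) as [i [Hic Hi3']].
  assert (Hi1' : ~ ltK i i1) by (intro; apply Hc1;
    destruct (totK c i) as [H'|[H'|H']]; [eauto| subst; auto| contradiction]).
  assert (Hi2' : ~ ltK i i2) by (intro; apply Hc2;
    destruct (totK c i) as [H'|[H'|H']]; [eauto| subst; auto| contradiction]).
  specialize (Hi2 i Hi2'). simpl in Hi2.
  apply (proj2 (Hhp i) (Hbig i Hi1') (f nu') Hf').
  destruct (Hi3 i Hi3') as [E|L]; [rewrite <- E; auto | eauto].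
Qed.
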